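(* Let $(X,+)$ be an abelian group, $(g,\gamma)$ a construction pair on $(X,+)$, and $C=\langle b\rangle$ a cyclic group such that, if $C$ is finite, both $|g|$ and $r(g,\gamma)$ divide $|C|$. Then the set $C\times X$ with multiplication $$(b^i,x)\cdot(b^j,y)=\Big(b^{i+j},\ g^{-j}(x)+y+\sum_{k\in I(i+j,-j)}g^{-k}(\gamma(x,y))\Big)$$ is a (well-defined) Moufang loop $Q=C\ltimes_{(g,\gamma)}X$ with neutral element $(1,0)$ and inverses $(b^i,x)^{-1}=(b^{-i},-g^i(x))$.
   Context: Let $(X,+)$ be an abelian group. A map $\gamma:X\times X\to X$ is symmetric if $\gamma(x,y)=\gamma(y,x)$, alternating if $\gamma(x,x)=0$, biadditive if additive in each argument. Its radical is $\mathrm{Rad}(\gamma)=\{x\in X:\gamma(x,y)=0\text{ for all }y\in X\}$. A construction pair on $(X,+)$ is a pair $(g,\gamma)$ where $g$ is a permutation of $X$ and $\gamma:X\times X\to X$ is symmetric, alternating and biadditive, such that for all $x,y,z\in X$: (C1) $g^{-1}(g(x)+g(y))=x+y+\gamma(x,y)+g^{-1}(\gamma(x,y))+g^{-2}(\gamma(x,y))$; (C2) $\gamma(\gamma(x,y),z)=0$; (C3) $g^{-1}(\gamma(x,y))=\gamma(g(x),y)$. For integers $i,j$ the interval $I(i,j)\subseteq\mathbb Z$ is $\emptyset$ if $i=j$, $\{i,\dots,j-1\}$ if $i<j$, and $\{j,\dots,i-1\}$ if $j<i$. $r(g,\gamma)$ is the least positive integer $r$ such that $\sum_{0\le k<r}g^k(x)\in\mathrm{Rad}(\gamma)$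 for all $x\in X$, or $\infty$ if none exists. A loop is Moufang if it satisfies $xy\cdot zx=(x\cdot yz)x$ for all $x,y,z$. *)

(* Defs.v *)
From HB Require Import structures.
From mathcomp Require Import all_boot all_order all_algebra.
Set Implicit Arguments. Unset Strict Implicit. Unset Printing Implicit Defensive.
Import Order.TTheory GRing.Theory Num.Theory.
Local Open Scope ring_scope.

Section Defs.
Variable X : zmodType.

Definition gpow (g ginv : X -> X) (k : int) : X -> X :=
  match k with
  | Posz m => iter m g
  | Negz m => iter m.+1 ginv
  end.

Definition symmetric_map (gam : X -> X -> X) := forall x y, gam x y = gam y x.
Definition alternating_map (gam : X -> X -> X) := forall x, gam x x = 0.
Definition biadditive (gam : X -> X -> X) :=
  (forall x x' y, gam (x + x') y = gam x y + gam x' y) /\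
  (forall x y y', gam x (y + y') = gam x y + gam x y').

Definition Rad (gam : X -> X -> X) (x : X) : Prop := forall y, gam x y = 0.

Definition construction_pair (g ginv : X -> X) (gam : X -> X -> X) : Prop :=
  [/\ cancel g ginv /\ cancel ginv g,
      symmetric_map gam /\ alternating_map gam /\ biadditive gam,
      (forall x y, ginv (g x + g y) =
          x + y + gam x y + ginv (gam x y) + ginv (ginv (gam x y))),
      (forall x y z, gam (gam x y) z = 0) &
      (forall x y, ginv (gam x y) = gam (g x) y)].

Definition perm_order_is (g : X -> X) (d : nat) : Prop :=
  (0 < d)%N /\ (forall x, iter d g x = x) /\
  (forall k, (0 < k < d)%N -> ~ (forall x, iter k g x = x)).

Definition r_is (g : X -> X) (gam : X -> X -> X) (r : nat) : Prop :=
  (0 < r)%N /\ (forall x, Rad gam (\sum_(0 <= k < r) iter k g x)) /\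
  (forall k, (0 < k < r)%N -> ~ (forall x, Rad gam (\sum_(0 <= k' < k) iter k' g x))).
End Defs.

Definition Iint (i j : int) : seq int :=
  if i == j then [::]
  else if i < j then [seq i + (k%:Z) | k <- iota 0 `|j - i|%N]
  else [seq j + (k%:Z) | k <- iota 0 `|i - j|%N].

Definition raw_mul (X : zmodType) (g ginv : X -> X) (gam : X -> X -> X)
  (p q : int * X) : int * X :=
  let: (i, x) := p in let: (j, y) := q in
  (i + j, gpow g ginv (- j) x + y +
          \sum_(k <- Iint (i + j) (- j)) gpow g ginv (- k) (gam x y)).

(* C = <b> cyclic of order n (n = 0 : infinite cyclic); b^i represented by
   the canonical representative i %% n (for n = 0 this is i itself) *)
Definition normC (X : zmodType) (n : nat) (p : int * X) : int * X :=
  ((p.1 %% n%:Z)%Z, p.2).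

Definition Qcarrier (X : zmodType) (n : nat) (p : int * X) : Prop :=
  (p.1 %% n%:Z)%Z = p.1.

Definition Qmul (X : zmodType) (n : nat) (g ginv : X -> X) (gam : X -> X -> X)
  (p q : int * X) : int * X := normC n (raw_mul g ginv gam p q).

Definition is_loop (T : Type) (P : T -> Prop) (mul : T -> T -> T) (e : T) : Prop :=
  [/\ P e, (forall a b, P a -> P b -> P (mul a b)),
      (forall a, P a -> mul e a = a /\ mul a e = a),
      (forall a b, P a -> P b -> exists x, [/\ P x, mul a x = b &
                    forall x', P x' -> mul a x' = b -> x' = x]) &
      (forall a b, P a -> P b -> exists y, [/\ P y, mul y a = b &
                    forall y', P y' -> mul y' a = b -> y' = y])].

Definition is_moufang_loop (T : Type) (P : T -> Prop) (mul : T -> T -> T) (e : T) :=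
  is_loop P mul e /\
  forall x y z, P x -> P y -> P z ->
    mul (mul x y) (mul z x) = mul (mul x (mul y z)) x.

(* Main.v *)
Require Import Defs.
From HB Require Import structures.
From mathcomp Require Import all_boot all_order all_algebra.
From mathcomp Require Import ring zify.
Set Implicit Arguments. Unset Strict Implicit. Unset Printing Implicit Defensive.
Import Order.TTheory GRing.Theory Num.Theory.
Local Open Scope ring_scope.

Section IintFacts.
Variable X : zmodType.

Lemma Iint_le (a b : int) : a <= b ->
  Iint a b = [seq a + (k%:Z) | k <- iota 0 (absz (b - a)%R)].
Proof.
move=> hab; rewrite /Iint; case: eqP => [->|hne]; first by rewrite subrr.
by rewrite lt_neqAle hab andbT; case: eqP.
Qed.

Lemma Iint_ge (a b : int) : b <= a ->
  Iint a b = [seq b + (k%:Z) | k <- iota 0 (absz (a - b)%R)].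
Proof.
move=> hab; rewrite /Iint; case: eqP => [->|hne]; first by rewrite subrr.
by rewrite ltNge hab.
Qed.

Lemma Iint_step (f : int -> X) (a b : int) : (forall k, f k + f k = 0) ->
  \sum_(m <- Iint a (b + 1)) f m = \sum_(m <- Iint a b) f m + f b.
Proof.
move=> f2; case: (lerP a b) => hab.
  rewrite Iint_le ?Iint_le //; last by lia.
  have -> : absz (b + 1 - a)%R = (absz (b - a)%R).+1 by lia.
  rewrite -addn1 iotaD map_cat big_cat /= big_cons big_nil addr0 add0n.
  by congr (_ + f _); lia.
rewrite (Iint_ge (ltW hab)) Iint_ge; last by lia.
have -> : absz (a - b)%R = (absz (a - (b + 1))%R).+1 by lia.
rewrite /= big_cons.
have -> : \sum_(j <- [seq b + k%:Z | k <- iota 1 (absz (a - (b + 1))%R)]) f j =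
          \sum_(j <- [seq b + 1 + k%:Z | k <- iota 0 (absz (a - (b + 1))%R)]) f j.
  rewrite (iotaDl 1 0) -map_comp !big_map; apply: eq_bigr => k _ /=.
  by congr f; lia.
by rewrite addr0 [RHS]addrC addrA f2 add0r.
Qed.

Lemma int_ind2 (P : int -> Prop) :
  P 0 -> (forall k, P k -> P (k + 1)) -> (forall k, P k -> P (k - 1)) -> forall k, P k.
Proof.
move=> P0 PS PP; elim/int_ind => [//|n|n].
  by move/PS; rewrite -[n.+1]addn1 PoszD.
by move/PP; rewrite -[n.+1]addn1 PoszD opprD.
Qed.

Lemma const_ind (D : int -> X) (a : int) : (forall p, D (p + 1) = D p) ->
  forall p, D p = D a.
Proof.
move=> hD.
have h0 : forall p, D p = D 0.
  apply: int_ind2 => // k IH; first by rewrite hD.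
  by rewrite -IH -[in RHS](subrK 1 k) hD.
by move=> p; rewrite h0 (h0 a).
Qed.

Lemma Iint_nil (a : int) : Iint a a = [::].
Proof. by rewrite /Iint eqxx. Qed.

Lemma sum2 (T : Type) (s : seq T) (f : T -> X) : (forall k, f k + f k = 0) ->
  \sum_(m <- s) f m + \sum_(m <- s) f m = 0.
Proof.
move=> f2; elim: s => [|t s IH]; first by rewrite big_nil addr0.
by rewrite big_cons addrACA f2 IH addr0.
Qed.

Lemma Iint_split (f : int -> X) (a b : int) : (forall k, f k + f k = 0) ->
  \sum_(m <- Iint a b) f m = \sum_(m <- Iint 0 a) f m + \sum_(m <- Iint 0 b) f m.
Proof.
move=> f2.
pose D b := \sum_(m <- Iint a b) f m - (\sum_(m <- Iint 0 a) f m + \sum_(m <- Iint 0 b) f m).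
suff: D b = 0 by move/eqP; rewrite subr_eq0 => /eqP.
rewrite (@const_ind D a); last first.
  move=> p; rewrite /D !Iint_step //.
  by rewrite [X in _ - X]addrA [X in _ - X]addrC addrKA.
rewrite /D Iint_nil big_nil sum2 // subr0 //.
Qed.

Lemma Iint_shift (f : int -> X) (a b c : int) : (forall k, f k + f k = 0) ->
  \sum_(m <- Iint a b) f (m + c) = \sum_(m <- Iint (a + c) (b + c)) f m.
Proof.
move=> f2.
pose D b := \sum_(m <- Iint a b) f (m + c) - \sum_(m <- Iint (a + c) (b + c)) f m.
suff: D b = 0 by move/eqP; rewrite subr_eq0 => /eqP.
rewrite (@const_ind D a); first by rewrite /D !Iint_nil !big_nil subrr.
move=> p; rewrite /D Iint_step; last by move=> k; apply: f2.
rewrite (_ : p + 1 + c = (p + c) + 1); last by ring.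
by rewrite Iint_step // opprD addrACA subrr addr0.
Qed.

Lemma Iint_neg (f : int -> X) (a b : int) : (forall k, f k + f k = 0) ->
  \sum_(m <- Iint a b) f (- m) = \sum_(m <- Iint (1 - a) (1 - b)) f m.
Proof.
move=> f2.
pose D b := \sum_(m <- Iint a b) f (- m) - \sum_(m <- Iint (1 - a) (1 - b)) f m.
suff: D b = 0 by move/eqP; rewrite subr_eq0 => /eqP.
rewrite (@const_ind D a); first by rewrite /D !Iint_nil !big_nil subrr.
move=> p; rewrite /D Iint_step; last by move=> k; apply: f2.
have -> : 1 - p = (1 - (p + 1)) + 1 by ring.
rewrite (Iint_step (f := f) (1 - a) (1 - (p + 1))) // (_ : 1 - (p + 1) = - p); last by ring.
have nf : - f (- p) = f (- p) by rewrite -[LHS]add0r -(f2 (- p)) addrK.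
by rewrite opprD nf addrA addrAC.
Qed.
End IintFacts.
(* formal (reflected) representation *)
Definition aff := (int * int * int * int)%type.
Definition addA (a b : aff) : aff :=
  (a.1.1.1 + b.1.1.1, a.1.1.2 + b.1.1.2, a.1.2 + b.1.2, a.2 + b.2).
Definition negA (a : aff) : aff := (- a.1.1.1, - a.1.1.2, - a.1.2, - a.2).
Definition cA (c : int) : aff := (0, 0, 0, c).
Definition evalA (r : int * int * int) (a : aff) : int :=
  a.1.1.1 * r.1.1 + a.1.1.2 * r.1.2 + a.1.2 * r.2 + a.2.

Lemma evalA_add r a b : evalA r (addA a b) = evalA r a + evalA r b.
Proof. by rewrite /evalA /addA /=; ring. Qed.
Lemma evalA_neg r a : evalA r (negA a) = - evalA r a.
Proof. by rewrite /evalA /negA /=; ring. Qed.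
Lemma evalA_c r c : evalA r (cA c) = c.
Proof. by rewrite /evalA /cA /=; ring. Qed.

Definition mterm := (aff * nat)%type.
Definition zterm := (aff * (nat * nat))%type.

Definition fpows (a b : seq mterm) : seq zterm :=
  flatten [seq [seq (negA (addA t.1 u.1), (minn t.2 u.2, maxn t.2 u.2)) | u <- b & u.2 != t.2] | t <- a].
Definition fJ (a b : aff) (ps : seq zterm) : seq zterm :=
  flatten [seq [:: (addA a p.1, p.2); (addA b p.1, p.2)] | p <- ps].
Definition fshift (k : aff) (zs : seq zterm) : seq zterm :=
  flatten [seq [:: (k, t.2); (addA k t.1, t.2)] | t <- zs].
Fixpoint fG (k : aff) (ms : seq mterm) : seq mterm * seq zterm :=
  match ms with
  | [::] => ([::], [::])
  | t :: r => let fr := fG k r in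
     ((addA k t.1, t.2) :: fr.1,
      fJ (addA k (cA 1)) (addA (cA 1) (negA (addA k k))) (fpows [:: t] r) ++ fr.2)
  end.
Definition fel := (aff * (seq mterm * seq zterm))%type.
Definition fmul (A B : fel) : fel :=
  let fx := fG (negA B.1) A.2.1 in
  (addA A.1 B.1, (fx.1 ++ B.2.1,
     fx.2 ++ (fshift (negA B.1) A.2.2 ++ (B.2.2 ++
     fJ (addA (cA 1) (negA (addA A.1 B.1))) (addA (cA 1) B.1) (fpows A.2.1 B.2.1))))).
Fixpoint cancel2 (T : eqType) (s : seq T) : seq T :=
  match s with
  | [::] => [::]
  | t :: r => let c := cancel2 r in if t \in c then rem t c else t :: c
  end.
Definition checkX (A B : seq mterm * seq zterm) :=
  perm_eq A.1 B.1 &&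
  perm_eq (cancel2 [seq t <- A.2 | t.1 != cA 0]) (cancel2 [seq t <- B.2 | t.1 != cA 0]).

Definition fa : fel := ((1, 0, 0, 0), ([:: ((0, 0, 0, 0), 0%N)], [::])).
Definition fb : fel := ((0, 1, 0, 0), ([:: ((0, 0, 0, 0), 1%N)], [::])).
Definition fc : fel := ((0, 0, 1, 0), ([:: ((0, 0, 0, 0), 2%N)], [::])).

Lemma moufang_formal1 :
  (fmul (fmul fa fb) (fmul fc fa)).1 = (fmul (fmul fa (fmul fb fc)) fa).1.
Proof. by vm_compute. Qed.
Lemma moufang_formal2 :
  checkX (fmul (fmul fa fb) (fmul fc fa)).2 (fmul (fmul fa (fmul fb fc)) fa).2.
Proof. by vm_compute. Qed.
Section Pair.
Variables (X : zmodType) (g ginv : X -> X) (gam : X -> X -> X).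
Hypotheses (gK : cancel g ginv) (ginvK : cancel ginv g).
Hypotheses (gsym : forall x y, gam x y = gam y x) (galt : forall x, gam x x = 0).
Hypotheses (gDl : forall x x' y, gam (x + x') y = gam x y + gam x' y)
           (gDr : forall x y y', gam x (y + y') = gam x y + gam x y').
Hypothesis C1 : forall x y, ginv (g x + g y) =
          x + y + gam x y + ginv (gam x y) + ginv (ginv (gam x y)).
Hypothesis C2 : forall x y z, gam (gam x y) z = 0.
Hypothesis C3 : forall x y, ginv (gam x y) = gam (g x) y.

Local Notation G := (gpow g ginv).

Lemma gam0l y : gam 0 y = 0.
Proof. have h := gDl 0 0 y; rewrite addr0 in h; apply: (addrI (gam 0 y)); by rewrite addr0 -h. Qed.
Lemma gam0r y : gam y 0 = 0.
Proof. by rewrite gsym gam0l. Qed.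
Lemma gamNl x y : gam (- x) y = - gam x y.
Proof. by apply/eqP; rewrite -addr_eq0 -gDl addNr gam0l. Qed.
Lemma gamNr x y : gam x (- y) = - gam x y.
Proof. by rewrite gsym gamNl gsym. Qed.
Lemma gam2 x y : gam x y + gam x y = 0.
Proof. by have := galt (x + y); rewrite gDl !gDr !galt add0r addr0 gsym. Qed.
Lemma gamNN x y : - gam x y = gam x y.
Proof. by rewrite -[LHS]add0r -(gam2 x y) addrK. Qed.
Lemma gam_suml (T : Type) (s : seq T) (F : T -> X) y :
  gam (\sum_(t <- s) F t) y = \sum_(t <- s) gam (F t) y.
Proof.
elim: s => [|t s IH]; first by rewrite !big_nil gam0l.
by rewrite !big_cons gDl IH.
Qed.
Lemma gam_sumr (T : Type) (s : seq T) (F : T -> X) y :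
  gam y (\sum_(t <- s) F t) = \sum_(t <- s) gam y (F t).
Proof. by rewrite gsym gam_suml; apply: eq_bigr => t _; rewrite gsym. Qed.

Lemma ginv0 : ginv 0 = 0.
Proof. by have := C3 0 0; rewrite !gam0r. Qed.
Lemma g0 : g 0 = 0.
Proof. by rewrite -{1}ginv0 ginvK. Qed.

Definition rad (w : X) := forall y, gam w y = 0.
Definition good (w : X) := rad w /\ w + w = 0.

Lemma rad0 : rad 0. Proof. by move=> y; rewrite gam0l. Qed.
Lemma radD u w : rad u -> rad w -> rad (u + w).
Proof. by move=> hu hw y; rewrite gDl hu hw addr0. Qed.
Lemma radN w : rad w -> rad (- w).
Proof. by move=> hw y; rewrite gamNl hw oppr0. Qed.
Lemma rad_gam x y : rad (gam x y). Proof. by move=> z; apply: C2. Qed.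
Lemma rad_r w x : rad w -> gam x w = 0. Proof. by move=> hw; rewrite gsym hw. Qed.

Lemma gam_g x y : gam (g x) y = ginv (gam x y). Proof. by rewrite C3. Qed.
Lemma gam_ginv x y : gam (ginv x) y = g (gam x y).
Proof. by rewrite -[in RHS](ginvK x) gam_g ginvK. Qed.

Lemma rad_g w : rad w -> rad (g w).
Proof. by move=> hw y; rewrite gam_g hw ginv0. Qed.
Lemma rad_ginv w : rad w -> rad (ginv w).
Proof. by move=> hw y; rewrite gam_ginv hw g0. Qed.

Lemma gD_rad a w : rad w -> g (a + w) = g a + g w.
Proof.
move=> hw; have := C1 a w; rewrite (rad_r _ hw) !ginv0 !addr0 => h.
by rewrite -h ginvK.
Qed.
Lemma ginvD_rad a w : rad w -> ginv (a + w) = ginv a + ginv w.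
Proof.
move=> hw; have := C1 (ginv a) (ginv w).
by rewrite !ginvK (rad_r _ (rad_ginv hw)) !ginv0 !addr0.
Qed.

Lemma G0 v : G 0 v = v. Proof. by []. Qed.
Lemma GS k v : G (k + 1) v = g (G k v).
Proof.
case: k => [m|m].
  by rewrite -PoszD addn1.
case: m => [|m]; first by rewrite /= ginvK.
rewrite (_ : Negz m.+1 + 1 = Negz m); last by rewrite !NegzE; lia.
by rewrite /= ginvK.
Qed.
Lemma GP k v : G (k - 1) v = ginv (G k v).
Proof. by rewrite -{2}(subrK 1 k) GS gK. Qed.
Lemma GD a b v : G (a + b) v = G a (G b v).
Proof.
elim/int_ind2: a => [|a IH|a IH]; first by rewrite add0r.
  by rewrite (addrAC a 1 b) !GS IH.
by rewrite (addrAC a (-1) b) !GP IH.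
Qed.
Lemma G1 v : G 1 v = g v. Proof. by []. Qed.
Lemma GN1 v : G (-1) v = ginv v. Proof. by []. Qed.
Lemma GK k v : G (- k) (G k v) = v.
Proof. by rewrite -GD addNr. Qed.
Lemma GKV k v : G k (G (- k) v) = v.
Proof. by rewrite -GD subrr. Qed.

Lemma G_zero k : G k 0 = 0.
Proof.
elim/int_ind2: k => [//|k IH|k IH]; first by rewrite GS IH g0.
by rewrite GP IH ginv0.
Qed.
Lemma rad_G k w : rad w -> rad (G k w).
Proof.
move=> hw; elim/int_ind2: k => [//|k IH|k IH]; first by rewrite GS; apply: rad_g.
by rewrite GP; apply: rad_ginv.
Qed.
Lemma GD_rad k a w : rad w -> G k (a + w) = G k a + G k w.
Proof.
move=> hw; elim/int_ind2: k => [//|k IH|k IH].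
  by rewrite !GS IH gD_rad //; apply: rad_G.
by rewrite !GP IH ginvD_rad //; apply: rad_G.
Qed.
Lemma GN_rad k w : rad w -> G k (- w) = - G k w.
Proof.
move=> hw; apply/eqP; rewrite -addr_eq0 -GD_rad // ?addNr ?G_zero //.
Abort.
Lemma gam_G k x y : gam (G k x) y = G (- k) (gam x y).
Proof.
elim/int_ind2: k x => [|k IH|k IH] x; first by [].
  by rewrite GS gam_g IH opprD -GP.
by rewrite GP gam_ginv IH opprB addrC GS.
Qed.
Lemma gam_Gr k x y : gam x (G k y) = G (- k) (gam x y).
Proof. by rewrite gsym gam_G gsym. Qed.

Lemma good_gam x y : good (gam x y).
Proof. by split; [apply: rad_gam | apply: gam2]. Qed.
Lemma good0 : good 0. Proof. by split; [apply: rad0|rewrite addr0]. Qed.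
Lemma goodD u w : good u -> good w -> good (u + w).
Proof.
by move=> [hu hu2] [hw hw2]; split; [apply: radD | rewrite addrACA hu2 hw2 addr0].
Qed.
Lemma good_G k w : good w -> good (G k w).
Proof.
by move=> [hw hw2]; split; [apply: rad_G | rewrite -GD_rad // hw2 G_zero].
Qed.
Lemma good_sum (T : Type) (s : seq T) (F : T -> X) :
  (forall t, good (F t)) -> good (\sum_(t <- s) F t).
Proof.
move=> hF; elim: s => [|t s IH]; first by rewrite big_nil; apply: good0.
by rewrite big_cons; apply: goodD.
Qed.
Lemma goodN w : good w -> - w = w.
Proof. by move=> [_ h]; rewrite -[LHS]add0r -h addrK. Qed.
Lemma G_sum_rad k (T : Type) (s : seq T) (F : T -> X) :
  (forall t, rad (F t)) -> G k (\sum_(t <- s) F t) = \sum_(t <- s) G k (F t).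
Proof.
move=> hF; elim: s => [|t s IH]; first by rewrite !big_nil G_zero.
rewrite !big_cons addrC GD_rad ?hF // IH addrC //.
Qed.
Definition S e w := \sum_(m <- Iint 0 e) G m w.
Definition T a b w := \sum_(m <- Iint a b) G m w.

Lemma G2 w : good w -> forall m, G m w + G m w = 0.
Proof. by move=> hw m; have [_ ->] := good_G m hw. Qed.

Lemma T_S a b w : good w -> T a b w = S a w + S b w.
Proof. by move=> hw; rewrite /T Iint_split //; apply: G2. Qed.
Lemma S0 w : S 0 w = 0.
Proof. by rewrite /S Iint_nil big_nil. Qed.
Lemma T_nil a w : T a a w = 0.
Proof. by rewrite /T Iint_nil big_nil. Qed.
Lemma S_T e w : S e w = T 0 e w. Proof. by []. Qed.
Lemma good_T a b w : good w -> good (T a b w).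
Proof. by move=> hw; apply: good_sum => m; apply: good_G. Qed.
Lemma good_S e w : good w -> good (S e w).
Proof. by move=> hw; apply: good_T. Qed.
Lemma T_sym a b w : good w -> T a b w = T b a w.
Proof. by move=> hw; rewrite !T_S // addrC. Qed.
Lemma T_chain a b c w : good w -> T a b w + T b c w = T a c w.
Proof.
move=> hw; rewrite !T_S // -addrA (addrA (S b w)).
by have [_ ->] := good_S b hw; rewrite add0r.
Qed.
Lemma T_shift a b s w : good w -> T a b (G s w) = T (a + s) (b + s) w.
Proof.
move=> hw; rewrite /T -Iint_shift; last by apply: G2.
by apply: eq_bigr => m _; rewrite GD.
Qed.
Lemma G_T k a b w : good w -> G k (T a b w) = T (a + k) (b + k) w.
Proof.
move=> hw; rewrite /T G_sum_rad; last by move=> m; apply: rad_G; case: hw.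
rewrite -Iint_shift; last by apply: G2.
by apply: eq_bigr => m _; rewrite -GD addrC.
Qed.
Lemma T_single s w : good w -> T s (s + 1) w = G s w.
Proof.
by move=> hw; rewrite /T Iint_step ?Iint_nil ?big_nil ?add0r //; apply: G2.
Qed.
Lemma T_add a b u w : rad u -> rad w -> T a b (u + w) = T a b u + T a b w.
Proof.
by move=> hu hw; rewrite /T -big_split; apply: eq_bigr => m _; rewrite GD_rad.
Qed.

Lemma T_m1_2 w : T (-1) 2 w = G (-1) w + G 0 w + G 1 w.
Proof.
rewrite /T Iint_le // /= !big_cons big_nil addr0 addrA.
have -> : -1 + 1%:Z = 0 by lia.
have -> : -1 + 2%:Z = 1 by lia.
by rewrite addr0 GN1.
Qed.
Lemma T_0_3 w : T 0 3 w = G 0 w + G 1 w + G 2 w.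
Proof. by rewrite /T Iint_le // /= !big_cons big_nil !add0r !addr0 !addrA. Qed.

Ltac radt := repeat first [ apply: radD | apply: radN | apply: rad_G | apply: rad_g
  | apply: rad_ginv | apply: rad_gam | apply: rad0 | assumption ].

Lemma g_exp p q : g (p + q) = g p + g q + T (-1) 2 (gam p q).
Proof.
set c := gam p q.
have hc : rad c by apply: rad_gam.
have h := C1 p q; rewrite -/c -!addrA in h.
have e : g p + g q = g (p + q) + g (c + (ginv c + ginv (ginv c))).
  by rewrite -[RHS]gD_rad; [rewrite -addrA -h ginvK | radt].
have gc : g (c + (ginv c + ginv (ginv c))) = T (-1) 2 c.
  rewrite T_m1_2 !gD_rad; try radt.
  by rewrite !ginvK G0 G1 GN1 addrC (addrC c).
have gc2 : good (T (-1) 2 c) by apply: good_T; apply: good_gam.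
by rewrite e gc -addrA; have [_ ->] := gc2; rewrite addr0.
Qed.
Lemma ginv_exp p q : ginv (p + q) = ginv p + ginv q + T 0 3 (gam p q).
Proof.
have h := C1 (ginv p) (ginv q); rewrite !ginvK in h; rewrite h -!addrA.
congr (_ + (_ + _)).
have -> : gam (ginv p) (ginv q) = G 2 (gam p q).
  by rewrite -!GN1 gam_G gam_Gr -GD.
rewrite T_0_3 -!GP.
have -> : 2 - 1 = 1 :> int by lia.
have -> : 1 - 1 = 0 :> int by lia.
by rewrite addrC (addrC (G 1 _)).
Qed.

Lemma Tk_good a b p q : good (T a b (gam p q)).
Proof. by apply: good_T; apply: good_gam. Qed.

Lemma gamGG k p q : gam (G k p) (G k q) = G (- k + - k) (gam p q).
Proof. by rewrite gam_G gam_Gr GD. Qed.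

Hint Resolve good_gam Tk_good : core.

Lemma Gexp k p q :
  G k (p + q) = G k p + G k q + T (k + 1) (1 - (k + k)) (gam p q).
Proof.
elim/int_ind2: k p q => [|k IH|k IH] p q.
  have -> : 1 - (0 + 0) = (0:int) + 1 by lia.
  by rewrite T_nil addr0.
- rewrite !GS IH gD_rad; last by case: (Tk_good (k + 1) (1 - (k + k)) p q).
  rewrite g_exp gamGG T_shift //.
  rewrite -[g (T _ _ _)]/(G 1 (T _ _ _)) G_T // -[LHS]addrA.
  congr (_ + _).
  have -> : 2 + (- k + - k) = 1 - (k + k) + 1 by lia.
  rewrite (T_sym (k + 1 + 1)) // T_chain // T_sym //.
  by congr T; lia.
- rewrite !GP IH ginvD_rad; last by case: (Tk_good (k + 1) (1 - (k + k)) p q).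
  rewrite ginv_exp gamGG T_shift //.
  rewrite -[ginv (T _ _ _)]/(G (-1) (T _ _ _)) G_T // -[LHS]addrA.
  congr (_ + _).
  have -> : 1 - (k + k) + -1 = 0 + (- k + - k) by lia.
  rewrite addrC T_chain //.
  by congr T; lia.
Qed.
Section Eval.
Variables (r : int * int * int) (v : nat -> X).

Definition evalM (t : mterm) := G (evalA r t.1) (v t.2).
Definition base (pq : nat * nat) := gam (v pq.1) (v pq.2).
Definition evalP (t : zterm) := G (evalA r t.1) (base t.2).
Definition evalZ (t : zterm) := S (evalA r t.1) (base t.2).
Definition evalX (Xf : seq mterm * seq zterm) :=
  \sum_(t <- Xf.1) evalM t + \sum_(t <- Xf.2) evalZ t.
Definition evalE (A : fel) := (evalA r A.1, evalX A.2).

Lemma good_base pq : good (base pq). Proof. exact: good_gam. Qed.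
Lemma good_evalP t : good (evalP t). Proof. by apply: good_G; apply: good_base. Qed.
Lemma good_evalZ t : good (evalZ t). Proof. by apply: good_S; apply: good_base. Qed.
Lemma good_sumP s : good (\sum_(t <- s) evalP t).
Proof. by apply: good_sum => t; apply: good_evalP. Qed.
Lemma good_sumZ s : good (\sum_(t <- s) evalZ t).
Proof. by apply: good_sum => t; apply: good_evalZ. Qed.
Hint Resolve good_base good_evalP good_evalZ good_sumP good_sumZ : core.

Lemma base_sym p q : base (minn p q, maxn p q) = gam (v p) (v q).
Proof.
rewrite /base; case: (leqP p q) => h.
  by [].
by rewrite /= gsym.
Qed.

Lemma reord1 (a b c d e f : X) :
  (a + b + c) + (d + e) + f = (a + d) + (b + (c + (e + f))).
Proof. by rewrite -!addrA; congr (_ + _); rewrite !addrA -(addrC d) -!addrA. Qed.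
Lemma reord2 (e a b c : X) : e + (a + b) + c = (e + a) + (c + b).
Proof. by rewrite -!addrA (addrC c). Qed.

Lemma fpows_ok a b : gam (\sum_(t <- a) evalM t) (\sum_(u <- b) evalM u) =
  \sum_(p <- fpows a b) evalP p.
Proof.
rewrite /fpows big_flatten /= big_map gam_suml; apply: eq_bigr => t _.
rewrite gam_sumr big_map big_filter [RHS]big_mkcond /=; apply: eq_bigr => u _.
rewrite /evalM /evalP gam_G gam_Gr -GD.
case: eqP => [e|ne] /=.
  by rewrite e galt G_zero.
by rewrite base_sym evalA_neg evalA_add [in RHS]opprD.
Qed.

Lemma fJ_ok a b (A B : int) ps : evalA r a = A -> evalA r b = B ->
  T A B (\sum_(p <- ps) evalP p) = \sum_(t <- fJ a b ps) evalZ t.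
Proof.
move=> ha hb; elim: ps => [|p ps IH].
  by rewrite !big_nil /T big1 // => m _; rewrite G_zero.
rewrite big_cons T_add; last 2 first.
  by case: (good_evalP p).
  by case: (good_sumP ps).
rewrite IH /fJ /= !big_cons addrA; congr (_ + _).
rewrite /evalP T_shift // T_S // /evalZ !evalA_add ha hb //.
Qed.

Lemma fshift_ok k zs : G (evalA r k) (\sum_(t <- zs) evalZ t) =
  \sum_(t <- fshift k zs) evalZ t.
Proof.
elim: zs => [|t zs IH]; first by rewrite !big_nil G_zero.
rewrite big_cons GD_rad; last by case: (good_sumZ zs).
rewrite IH /fshift /= !big_cons addrA; congr (_ + _).
by rewrite {1}/evalZ S_T G_T // T_S // add0r /evalZ /= evalA_add (addrC (evalA r k)).
Qed.

Lemma fG_ok k ms : G (evalA r k) (\sum_(t <- ms) evalM t) = evalX (fG k ms).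
Proof.
elim: ms => [|t ms IH]; first by rewrite /evalX /= !big_nil G_zero addr0.
rewrite big_cons Gexp IH.
have := fpows_ok [:: t] ms; rewrite big_seq1 => ->.
rewrite (@fJ_ok (addA k (cA 1)) (addA (cA 1) (negA (addA k k)))); last 2 first.
  by rewrite evalA_add evalA_c.
  by rewrite evalA_add evalA_c evalA_neg evalA_add.
rewrite /evalX /= big_cons big_cat /= reord2; congr (_ + _ + _).
by rewrite /evalM /= evalA_add GD.
Qed.

Lemma fmul_ok A B : raw_mul g ginv gam (evalE A) (evalE B) = evalE (fmul A B).
Proof.
case: A => [i [ma za]]; case: B => [j [mb zb]].
rewrite /evalE /raw_mul /fmul /=; congr pair; first by rewrite evalA_add.
rewrite /evalX /=.
set MA := \sum_(t <- ma) evalM t; set ZA := \sum_(t <- za) evalZ t.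
set MB := \sum_(t <- mb) evalM t; set ZB := \sum_(t <- zb) evalZ t.
have rZA : rad ZA by case: (good_sumZ za).
have rZB : rad ZB by case: (good_sumZ zb).
have gAB : gam (MA + ZA) (MB + ZB) = gam MA MB.
  by rewrite gDl !gDr (rZA MB) (rZA ZB) (rad_r _ rZB) !addr0.
rewrite gAB fpows_ok GD_rad // -evalA_neg fG_ok fshift_ok.
set W := \sum_(p <- fpows ma mb) evalP p.
have hN : \sum_(k <- Iint (evalA r i + evalA r j) (evalA r (negA j))) G (- k) W =
          T (1 - (evalA r i + evalA r j)) (1 + evalA r j) W.
  rewrite evalA_neg (Iint_neg (f := fun m => G m W)) ?opprK //.
  by apply: G2; apply: good_sumP.
rewrite hN (@fJ_ok (addA (cA 1) (negA (addA i j))) (addA (cA 1) j)); last 2 first.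
  by rewrite evalA_add evalA_c evalA_neg evalA_add.
  by rewrite evalA_add evalA_c.
by rewrite /evalX !big_cat /= reord1.
Qed.

Lemma cancel2_ok (T0 : eqType) (s : seq T0) (f : T0 -> X) :
  (forall t, f t + f t = 0) -> \sum_(t <- cancel2 s) f t = \sum_(t <- s) f t.
Proof.
move=> f2; elim: s => [//|t s IH] /=.
case: ifP => hin.
  rewrite big_cons -IH (big_rem t hin) /= addrA f2 add0r //.
by rewrite !big_cons IH.
Qed.

Lemma checkX_ok A B : checkX A B -> evalX A = evalX B.
Proof.
case/andP => hM hZ; rewrite /evalX (perm_big _ hM); congr (_ + _).
have f2 : forall t, evalZ t + evalZ t = 0 by move=> t; case: (good_evalZ t).
rewrite (bigID (fun t => t.1 != cA 0)) [in RHS](bigID (fun t => t.1 != cA 0)) /=.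
have z0 : forall s, \sum_(t <- s | ~~ (t.1 != cA 0)) evalZ t = 0.
  move=> s; apply: big1 => t; rewrite negbK => /eqP e.
  by rewrite /evalZ e evalA_c S0.
have e1 : forall s, \sum_(t <- s | t.1 != cA 0) evalZ t =
    \sum_(t <- cancel2 [seq t <- s | t.1 != cA 0]) evalZ t.
  by move=> s; rewrite cancel2_ok // big_filter.
rewrite !z0 !addr0 !e1; exact: perm_big.
Qed.
End Eval.

Lemma raw_moufang (i j l : int) (x y z : X) :
  raw_mul g ginv gam (raw_mul g ginv gam (i, x) (j, y)) (raw_mul g ginv gam (l, z) (i, x)) =
  raw_mul g ginv gam (raw_mul g ginv gam (i, x) (raw_mul g ginv gam (j, y) (l, z))) (i, x).
Proof.
pose r := (i, j, l); pose v := fun n => nth 0 [:: x; y; z] n.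
have e0 : evalA r (0, 0, 0, 0) = 0 by rewrite /evalA /=; ring.
have ha : (i, x) = evalE r v fa.
  by rewrite /evalE /evalX /= big_seq1 big_nil addr0 /evalM /= e0 /evalA /=; congr pair; ring.
have hb : (j, y) = evalE r v fb.
  by rewrite /evalE /evalX /= big_seq1 big_nil addr0 /evalM /= e0 /evalA /=; congr pair; ring.
have hc : (l, z) = evalE r v fc.
  by rewrite /evalE /evalX /= big_seq1 big_nil addr0 /evalM /= e0 /evalA /=; congr pair; ring.
rewrite ha hb hc !fmul_ok /evalE moufang_formal1.
by rewrite (checkX_ok r v moufang_formal2).
Qed.

Lemma G_opp k a : G k (- a) = - G k a.
Proof.
apply/eqP; rewrite -addr_eq0; apply/eqP.
have := Gexp k a (- a); rewrite subrr G_zero gamNr galt oppr0.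
have -> : T (k + 1) (1 - (k + k)) 0 = 0.
  by rewrite /T big1 // => m _; rewrite G_zero.
by rewrite addr0 addrC => <-.
Qed.

Lemma helperL (a b c : X) : a + b + c - a = b + c.
Proof. by rewrite -(addrA a) (addrC a) addrK. Qed.
Lemma helperR (s x t : X) : s + x + t - x = s + t.
Proof. by rewrite addrAC addrK. Qed.

Section Loop.
Variable n : nat.
Hypothesis HG : forall v, G (n%:Z) v = v.
Hypothesis HR : forall x, rad (\sum_(0 <= k < n) iter k g x).

Definition eqv (p q : int * X) := ((p.1 %% n)%Z = (q.1 %% n)%Z) /\ p.2 = q.2.

Lemma Gper c v : G (c * n%:Z) v = v.
Proof.
elim/int_ind2: c v => [|c IH|c IH] v; first by rewrite mul0r.
  by rewrite mulrDl mul1r GD HG IH.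
rewrite mulrBl mul1r GD -{2}(IH v); congr (G _ _).
by rewrite -{1}(HG v) GK.
Qed.

Lemma G_mod a c v : G (a + c * n%:Z) v = G a v.
Proof. by rewrite addrC GD Gper. Qed.

Section Fs.
Variables x y : X.
Definition Fs p := \sum_(k <- Iint 0 p) G (- k) (gam x y).
Let f2 : forall k, G (- k) (gam x y) + G (- k) (gam x y) = 0.
Proof. by move=> k; apply: G2. Qed.

Lemma Iint_n_zero p : \sum_(k <- Iint p (p + n%:Z)) G (- k) (gam x y) = 0.
Proof.
rewrite -{1}(add0r p) (addrC p) -(Iint_shift (f := fun k => G (- k) (gam x y))) //.
have -> : \sum_(m <- Iint 0 n%:Z) G (- (m + p)) (gam x y) =
          gam (\sum_(m <- Iint 0 n%:Z) G m (G p x)) y.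
  by rewrite gam_suml; apply: eq_bigr => m _; rewrite gam_G gam_G -GD opprD.
rewrite Iint_le // big_map subr0 absz_nat.
have := HR (G p x) y; congr (gam _ _ = 0).
by rewrite /index_iota subn0; apply: eq_bigr => k _; rewrite add0r.
Qed.

Lemma Fs_per p : Fs (p + n%:Z) = Fs p.
Proof.
have := Iint_n_zero p; rewrite Iint_split // -/(Fs p) -/(Fs _) => h.
have gF : good (Fs p) by apply: good_sum => k; apply: good_G; apply: good_gam.
move/eqP: h; rewrite addrC addr_eq0 => /eqP ->; exact: goodN.
Qed.

Lemma Fs_mod p c : Fs (p + c * n%:Z) = Fs p.
Proof.
elim/int_ind2: c p => [|c IH|c IH] p; first by rewrite mul0r addr0.
  by rewrite mulrDl mul1r addrA Fs_per IH.
rewrite -[LHS]Fs_per -[RHS](IH p); congr Fs; ring.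
Qed.

Lemma sum_Fs a b : \sum_(k <- Iint a b) G (- k) (gam x y) = Fs a + Fs b.
Proof. by rewrite Iint_split. Qed.
End Fs.

Lemma mod_eq (i i' : int) : (i == i' %[mod n%:Z])%Z -> exists c, i' = i + c * n%:Z.
Proof.
rewrite eqz_mod_dvd => /dvdzP [q hq]; exists (- q).
by rewrite mulNr -hq; ring.
Qed.

Lemma raw_wd (i i' j j' : int) (x y : X) :
  (i == i' %[mod n%:Z])%Z -> (j == j' %[mod n%:Z])%Z ->
  ((raw_mul g ginv gam (i, x) (j, y)).1 ==
     (raw_mul g ginv gam (i', x) (j', y)).1 %[mod n%:Z])%Z /\
  (raw_mul g ginv gam (i, x) (j, y)).2 = (raw_mul g ginv gam (i', x) (j', y)).2.
Proof.
move=> /mod_eq [ci ->] /mod_eq [cj ->] /=; split.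
  rewrite (_ : i + ci * n%:Z + (j + cj * n%:Z) = (ci + cj) * n%:Z + (i + j)); last by ring.
  by rewrite modzMDl.
rewrite !sum_Fs.
rewrite (_ : - (j + cj * n%:Z) = - j + (- cj) * n%:Z); last by ring.
rewrite (_ : i + ci * n%:Z + (j + cj * n%:Z) = (i + j) + (ci + cj) * n%:Z); last by ring.
by rewrite !Fs_mod G_mod.
Qed.

Lemma raw_eqv p p' q q' : eqv p p' -> eqv q q' ->
  eqv (raw_mul g ginv gam p q) (raw_mul g ginv gam p' q').
Proof.
case: p p' q q' => [i x] [i' x'] [j y] [j' y'] [/= hi <-] [/= hj <-].
have [h1 h2] := @raw_wd i i' j j' x y (introT eqP hi) (introT eqP hj).
by split => //; apply/eqP.
Qed.

Lemma normC_eqv p : eqv (normC n p) p.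
Proof. by split => //=; rewrite modz_mod. Qed.
Lemma eqv_normC p q : eqv p q -> normC n p = normC n q.
Proof. by case: p q => [i x] [j y] [/= h <-]; rewrite /normC /= h. Qed.
Lemma eqv_sym p q : eqv p q -> eqv q p.
Proof. by case=> h1 h2; split. Qed.
Lemma eqv_trans p q s : eqv p q -> eqv q s -> eqv p s.
Proof. by case=> h1 h2 [h3 h4]; split; [rewrite h1 | rewrite h2]. Qed.
Lemma eqv_refl p : eqv p p. Proof. by []. Qed.

Lemma Qmul_raw a b c d : eqv a c -> eqv b d ->
  Qmul n g ginv gam a b = normC n (raw_mul g ginv gam c d).
Proof. by move=> h1 h2; apply: eqv_normC; apply: raw_eqv. Qed.

Lemma Q_moufang a b c :
  Qmul n g ginv gam (Qmul n g ginv gam a b) (Qmul n g ginv gam c a) =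
  Qmul n g ginv gam (Qmul n g ginv gam a (Qmul n g ginv gam b c)) a.
Proof.
case: a b c => [i x] [j y] [l z].
rewrite (@Qmul_raw _ _ (raw_mul g ginv gam (i, x) (j, y)) (raw_mul g ginv gam (l, z) (i, x)));
  try exact: normC_eqv.
rewrite raw_moufang; apply: eqv_normC; apply: raw_eqv => //.
eapply eqv_trans; last by apply: eqv_sym; apply: normC_eqv.
apply: raw_eqv => //; apply: eqv_sym; exact: normC_eqv.
Qed.

Lemma Qcarrier_normC p : Qcarrier (X := X) n (normC n p).
Proof. by rewrite /Qcarrier /normC /= modz_mod. Qed.

Lemma sum_zero (s : seq int) : \sum_(m <- s) G (- m) 0 = 0.
Proof. by rewrite big1 // => m _; rewrite G_zero. Qed.

Lemma Q_e_l a : Qcarrier (X := X) n a -> Qmul n g ginv gam (0, 0) a = a.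
Proof.
case: a => [i x] ha; rewrite /Qmul /raw_mul /normC /= add0r G_zero add0r.
rewrite (eq_bigr (fun m => G (- m) 0)); last by move=> m _; rewrite gam0l.
by rewrite sum_zero addr0 ha.
Qed.

Lemma Q_e_r a : Qcarrier (X := X) n a -> Qmul n g ginv gam a (0, 0) = a.
Proof.
case: a => [i x] ha; rewrite /Qmul /raw_mul /normC /= addr0 oppr0 addr0.
rewrite (eq_bigr (fun m => G (- m) 0)); last by move=> m _; rewrite gam0r.
by rewrite sum_zero addr0 ha.
Qed.

Section LeftDiv.
Variables (i : int) (x : X).
Definition hL (j : int) (t : X) := \sum_(m <- Iint (i + j) (- j)) G (- m) (gam x t).
Lemma hL_add j t1 t2 : hL j (t1 + t2) = hL j t1 + hL j t2.
Proof.
rewrite /hL -big_split; apply: eq_bigr => m _.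
by rewrite gDr GD_rad //; apply: rad_gam.
Qed.
Lemma hL_good j t : good (hL j t).
Proof. by apply: good_sum => m; apply: good_G; apply: good_gam. Qed.
Lemma hL_hL j t : hL j (hL j t) = 0.
Proof.
rewrite /hL (eq_bigr (fun m => G (- m) 0)) ?sum_zero // => m _.
by rewrite (rad_r _ (proj1 (hL_good j t))).
Qed.
End LeftDiv.

Lemma left_div a b : Qcarrier (X := X) n a -> Qcarrier (X := X) n b ->
  exists q, [/\ Qcarrier (X := X) n q, Qmul n g ginv gam a q = b &
    forall q', Qcarrier (X := X) n q' -> Qmul n g ginv gam a q' = b -> q' = q].
Proof.
case: a b => [i x] [k z]; rewrite /Qcarrier /= => ha hb.
pose j := ((k - i) %% n%:Z)%Z; pose w := z - G (- j) x.
have key : forall y, y + hL i x j y = w <-> y = w + hL i x j w.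
  move=> y; split => [<-|->].
    rewrite hL_add hL_hL addr0 -addrA; have [_ ->] := hL_good i x j y.
    by rewrite addr0.
  by rewrite hL_add hL_hL addr0 -addrA; have [_ ->] := hL_good i x j w; rewrite addr0.
have hj : (j %% n%:Z)%Z = j by rewrite modz_mod.
have e1 : ((i + j) %% n%:Z)%Z = k by rewrite modzDmr addrC subrK.
exists (j, w + hL i x j w); split => //.
  rewrite /Qmul /normC /raw_mul /= e1; congr pair.
  by rewrite -addrA (proj2 (key _) erefl) /w addrC subrK.
case=> [j' y'] /= hj'; rewrite /Qmul /normC /raw_mul /= => [[e1' e2']].
have ej : j' = j.
  by rewrite /j -e1' modzDml (addrC i) addrK hj'.
rewrite ej in e2' *; congr pair; apply/key.
by rewrite /w -e2' helperL.
Qed.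

Section RightDiv.
Variables (i : int) (x : X).
Definition hR (j : int) (s : X) :=
  \sum_(m <- Iint (j + i) (- i)) G (- m) (G (- i) (gam s x)).
Lemma hR_add j t1 t2 : hR j (t1 + t2) = hR j t1 + hR j t2.
Proof.
rewrite /hR -big_split; apply: eq_bigr => m _.
by rewrite gDl (GD_rad _ _ (rad_gam _ _)) (GD_rad _ _ (rad_G _ (rad_gam _ _))).
Qed.
Lemma hR_good j t : good (hR j t).
Proof. by apply: good_sum => m; apply: good_G; apply: good_G; apply: good_gam. Qed.
Lemma hR_hR j t : hR j (hR j t) = 0.
Proof.
rewrite /hR (eq_bigr (fun m => G (- m) 0)) ?sum_zero // => m _.
by rewrite (proj1 (hR_good j t)) G_zero.
Qed.
End RightDiv.

Lemma right_div a b : Qcarrier (X := X) n a -> Qcarrier (X := X) n b ->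
  exists q, [/\ Qcarrier (X := X) n q, Qmul n g ginv gam q a = b &
    forall q', Qcarrier (X := X) n q' -> Qmul n g ginv gam q' a = b -> q' = q].
Proof.
case: a b => [i x] [k z]; rewrite /Qcarrier /= => ha hb.
pose j := ((k - i) %% n%:Z)%Z; pose w := z - x.
have key : forall s, s + hR i x j s = w <-> s = w + hR i x j w.
  move=> s; split => [<-|->].
    rewrite hR_add hR_hR addr0 -addrA; have [_ ->] := hR_good i x j s.
    by rewrite addr0.
  by rewrite hR_add hR_hR addr0 -addrA; have [_ ->] := hR_good i x j w; rewrite addr0.
have hj : (j %% n%:Z)%Z = j by rewrite modz_mod.
have e1 : ((j + i) %% n%:Z)%Z = k by rewrite modzDml subrK.
have hRG : forall s, \sum_(m <- Iint (j + i) (- i)) G (- m) (gam (G i s) x) = hR i x j s.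
  by move=> s; apply: eq_bigr => m _; rewrite gam_G.
exists (j, G i (w + hR i x j w)); split => //.
  rewrite /Qmul /normC /raw_mul /= e1 GK hRG; congr pair.
  by rewrite addrAC (proj2 (key _) erefl) /w subrK.
case=> [j' y'] /= hj'; rewrite /Qmul /normC /raw_mul /= => [[e1' e2']].
have ej : j' = j.
  by rewrite /j -e1' modzDml addrK hj'.
rewrite ej in e2' *; congr pair.
have ey : y' = G i (G (- i) y') by rewrite GKV.
set s' := G (- i) y' in e2' ey *.
rewrite {1}ey hRG in e2'.
rewrite ey; congr (G i _); apply/key.
by rewrite /w -e2' helperR.
Qed.

Lemma Q_inv i x : Qcarrier (X := X) n (i, x) ->
  let inv := normC n (- i, - G i x) in
  Qmul n g ginv gam (i, x) inv = (0, 0) /\ Qmul n g ginv gam inv (i, x) = (0, 0).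
Proof.
move=> hc inv; split.
  rewrite (@Qmul_raw _ _ (i, x) (- i, - G i x)) //; last exact: normC_eqv.
  rewrite /raw_mul /normC /= subrr mod0z opprK subrr add0r.
  rewrite (eq_bigr (fun m => G (- m) 0)) ?sum_zero // => m _.
  by rewrite gamNr gam_Gr galt G_zero oppr0.
rewrite (@Qmul_raw _ _ (- i, - G i x) (i, x)) //; last exact: normC_eqv.
rewrite /raw_mul /normC /= addNr mod0z G_opp GK addNr add0r.
rewrite (eq_bigr (fun m => G (- m) 0)) ?sum_zero // => m _.
by rewrite gamNl gam_G galt G_zero oppr0.
Qed.
End Loop.

Lemma main_pair (n : nat) :
  ((0 < n)%N ->
     (exists d, perm_order_is g d /\ (d %| n)%N) /\
     (exists r, r_is g gam r /\ (r %| n)%N)) ->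
  (forall (i i' j j' : int) (x y : X),
     (i == i' %[mod n%:Z])%Z -> (j == j' %[mod n%:Z])%Z ->
     ((raw_mul g ginv gam (i, x) (j, y)).1 ==
        (raw_mul g ginv gam (i', x) (j', y)).1 %[mod n%:Z])%Z /\
     (raw_mul g ginv gam (i, x) (j, y)).2 = (raw_mul g ginv gam (i', x) (j', y)).2) /\
  is_moufang_loop (Qcarrier (X := X) n) (Qmul n g ginv gam) (0, 0) /\
  (forall i x, Qcarrier n (i, x) ->
     let inv := normC n (- i, - gpow g ginv i x) in
     Qmul n g ginv gam (i, x) inv = (0, 0) /\ Qmul n g ginv gam inv (i, x) = (0, 0)).
Proof.
move=> hn.
have HG : forall v, G (n%:Z) v = v.
  case: n hn => [|n'] hn v; first by [].
  have [[d [[_ [hd _]] /dvdnP [k ->]]] _] := hn erefl.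
  rewrite /gpow; elim: k => [//|k IH].
  by rewrite mulSn iterD hd IH.
have HR : forall x, rad (\sum_(0 <= k < n) iter k g x).
  clear HG; case: n hn => [|n'] hn x.
    by rewrite big_geq //; apply: rad0.
  have [_ [r [[_ [hr _]] /dvdnP [k ->]]]] := hn erefl.
  elim: k => [|k IH]; first by rewrite mul0n big_geq //; apply: rad0.
  rewrite mulSn addnC (big_cat_nat (leq0n (k * r)) (leq_addr r (k * r))) /=.
  apply: radD => //.
  rewrite -{1}(add0n (k * r)%N) big_addn addKn.
  rewrite (eq_bigr (fun i => iter i g (iter (k * r) g x))); first exact: hr.
  by move=> i _; rewrite iterD.
split; [|split].
- by move=> i i' j j' x y hi hj; apply: raw_wd.
- split; last by move=> a b c _ _ _; apply: Q_moufang.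
  split.
  + by rewrite /Qcarrier /= mod0z.
  + by move=> a b _ _; apply: Qcarrier_normC.
  + by move=> a ha; split; [apply: Q_e_l | apply: Q_e_r].
  + by move=> a b ha hb; apply: left_div.
  + by move=> a b ha hb; apply: right_div.
- by move=> i x hc; apply: Q_inv.
Qed.
End Pair.

Unset Implicit Arguments.
Set Strict Implicit.

Theorem mainTheorem2 (X : zmodType) (g ginv : X -> X) (gam : X -> X -> X) (n : nat) :
  construction_pair g ginv gam ->
  ((0 < n)%N ->
     (exists d, perm_order_is g d /\ (d %| n)%N) /\
     (exists r, r_is g gam r /\ (r %| n)%N)) ->
  (* well-definedness: the formula does not depend on representatives of b^i, b^j *)
  (forall (i i' j j' : int) (x y : X),
     (i == i' %[mod n%:Z])%Z -> (j == j' %[mod n%:Z])%Z ->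
     ((raw_mul g ginv gam (i, x) (j, y)).1 ==
        (raw_mul g ginv gam (i', x) (j', y)).1 %[mod n%:Z])%Z /\
     (raw_mul g ginv gam (i, x) (j, y)).2 = (raw_mul g ginv gam (i', x) (j', y)).2) /\
  is_moufang_loop (Qcarrier (X := X) n) (Qmul n g ginv gam) (0, 0) /\
  (forall i x, Qcarrier n (i, x) ->
     let inv := normC n (- i, - gpow g ginv i x) in
     Qmul n g ginv gam (i, x) inv = (0, 0) /\ Qmul n g ginv gam inv (i, x) = (0, 0)).
Proof.
case=> [[gK ginvK] [gsym [galt [gDl gDr]]] C1 C2 C3] hn.
by apply: main_pair.
Qed.
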